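(* Let $R,r>0$, $q_1=\frac{1}{2r}+\frac{1}{2R}$, and let $K^{-1/2}_0$, $\mathcal{K}^*_{\partial\Omega}$ and $\{\mathbb{E}(t)\}_{t\in[-1/2,1/2]}$ be as in the context (touching disks). Then $$\mathcal{K}^*_{\partial\Omega}=\int_{-1/2}^{1/2}t\,d\mathbb{E}(t),$$ that is, $\langle f,\mathcal{K}^*_{\partial\Omega}[g]\rangle_{-1/2}=\int_{-1/2}^{1/2}t\,d\langle f,\mathbb{E}(t)g\rangle_{-1/2}$ for all $f,g\in K^{-1/2}_0$.
   Context: Setting (touching disks). Identify $\mathbb{R}^2$ with $\mathbb{C}$; for $a\in\mathbb{R}\setminus\{0\}$ let $B_a$ be the open disk of radius $|a|$ centered at $(a,0)$. Fix $R,r>0$, let $\Omega=B_R\cup B_{-r}$ (two externally touching disks), and put $q_1=\frac{1}{2r}+\frac{1}{2R}>0$. For $k\neq0$ let $$\mathbb{S}(k)=\frac{1}{2|k|}\begin{bmatrix}1-e^{-|k|q_1}&0\\0&1+e^{-|k|q_1}\end{bmatrix},\qquad \mathbb{K}(k)=\frac12e^{-|k|q_1}\begin{bmatrix}1&0\\0&-1\end{bmatrix}.$$ $K^{-1/2}_0$ is the Hilbert space of pairs $\hat\varphi=(\hat\varphi_1,\hat\varphi_2)^T$ of measurable complex functions on $\mathbb{R}$ (mod a.e.) with $\int_{\mathbb{R}}\hat\varphi^T\mathbb{S}\overline{\hat\varphi}\,dk<\infty$, with inner product $\langle\psi,\varphi\rangle_{-1/2}=\int_{\mathbb{R}}\hat\psi^T\mathbb{S}\overline{\hat\varphi}\,dk$.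 (In the paper such a pair represents the boundary density $\varphi=U^{-1}P\hat\varphi$ on $\partial\Omega$, with $P=\frac1{\sqrt2}\begin{bmatrix}-1&1\\1&1\end{bmatrix}$ and $U$ the Fourier transform of the density pulled back by $z\mapsto 1/z$ to the lines $x=\frac1{2R}$ and $x=-\frac1{2r}$; one writes $PU\varphi=(\hat\varphi_1,\hat\varphi_2)^T$.) The Neumann–Poincaré operator $\mathcal{K}^*_{\partial\Omega}$ on $K^{-1/2}_0$ is the multiplication operator $\hat\varphi\mapsto\mathbb{K}\hat\varphi$. For $s\in\mathbb{R}\cup\{\infty\}$ let $\mathcal{P}^1(s)(\hat\varphi_1,\hat\varphi_2)=(\chi_{(-\infty,s]}\hat\varphi_1,0)$, $\mathcal{P}^2(s)(\hat\varphi_1,\hat\varphi_2)=(0,\chi_{(-\infty,s]}\hat\varphi_2)$ (with $\chi_{(-\infty,\infty]}\equiv1$), $\mathbb{I}=\mathcal{P}^1(\infty)+\mathcal{P}^2(\infty)$, and $$\mathbb{E}(t)=\begin{cases}\mathcal{P}^2\!\left(-\frac{\ln(-2t)}{q_1}\right)-\mathcal{P}^2\!\left(\frac{\ln(-2t)}{q_1}\right),& t\in[-1/2,0),\\[2pt]\mathcal{P}^1\!\left(\frac{\ln(2t)}{q_1}\right)-\mathcal{P}^1\!\left(-\frac{\ln(2t)}{q_1}\right)+\mathbb{I},& t\in(0,1/2],\end{cases}\qquad \mathbb{E}(0)=\lim_{t\to0^+}\mathbb{E}(t).$$ *)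

(* Defs.v *)
From HB Require Import structures.
From mathcomp Require Import all_boot all_order all_algebra.
From mathcomp Require Import all_classical all_reals all_analysis.
From mathcomp Require Import complex.
Set Implicit Arguments. Unset Strict Implicit. Unset Printing Implicit Defensive.
Import Order.TTheory GRing.Theory Num.Theory.
Local Open Scope ring_scope.
Local Open Scope complex_scope.

Section TouchingDisks.
Variable R : realType.

Definition q1 (r Rad : R) : R := 1 / (2 * r) + 1 / (2 * Rad).

(* A pair (phi_1, phi_2) of complex functions on the real line,
   stored as k |-> column vector (phi_1 k, phi_2 k)^T. *)
Definition dens := R -> 'cV[R[i]]_2.

(* The matrix symbol S(k) (only used for k <> 0; the value at k = 0 is
   irrelevant, a null set). *)
Definition Smx (q k : R) : 'M[R[i]]_2 :=
  \matrix_(i, j) (if i == j then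
      (if i == 0 then ((1 / (2 * `|k|)) * (1 - expR (- (`|k| * q))))%:C
       else ((1 / (2 * `|k|)) * (1 + expR (- (`|k| * q))))%:C)
    else 0).

Definition Kmx (q k : R) : 'M[R[i]]_2 :=
  \matrix_(i, j) (if i == j then
      (if i == 0 then ((1 / 2) * expR (- (`|k| * q)))%:C
       else (- ((1 / 2) * expR (- (`|k| * q))))%:C)
    else 0).

Definition form (q : R) (psi phi : dens) (k : R) : R[i] :=
  (((psi k)^T *m Smx q k *m map_mx (@conjc R) (phi k)) ord0 ord0).

Definition cint (f : R -> R[i]) : R[i] :=
  (Rintegral lebesgue_measure setT (fun k => complex.Re (f k)))
    +i* (Rintegral lebesgue_measure setT (fun k => complex.Im (f k))).

Definition inK0 (q : R) (phi : dens) : Prop :=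
  (forall i : 'I_2,
      measurable_fun setT (fun k => complex.Re (phi k i ord0)) /\
      measurable_fun setT (fun k => complex.Im (phi k i ord0))) /\
  (\int[lebesgue_measure]_k (complex.Re (form q phi phi k))%:E < +oo)%E.

Definition ip (q : R) (psi phi : dens) : R[i] := cint (form q psi phi).

Definition Kop (q : R) (phi : dens) : dens := fun k => Kmx q k *m phi k.

Definition dadd (a b : dens) : dens := fun k => a k + b k.
Definition dsub (a b : dens) : dens := fun k => a k - b k.

Definition chi (s : \bar R) (k : R) : R := if (k%:E <= s)%E then 1 else 0.

Definition P1 (s : \bar R) (phi : dens) : dens := fun k =>
  \col_i (if i == 0 then (chi s k)%:C * phi k i ord0 else 0).
Definition P2 (s : \bar R) (phi : dens) : dens := fun k =>
  \col_i (if i == 0 then 0 else (chi s k)%:C * phi k i ord0).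

Definition Iop (phi : dens) : dens := dadd (P1 +oo%E phi) (P2 +oo%E phi).

(* The spectral family E(t).  For t < 0 and t > 0 the formulas of the paper;
   E(0) := lim_{t -> 0+} E(t), which equals P^2(oo) (computed explicitly). *)
Definition Efam (q t : R) (phi : dens) : dens :=
  if t < 0 then
    dsub (P2 ((- ln (- (2 * t)) / q)%:E) phi) (P2 ((ln (- (2 * t)) / q)%:E) phi)
  else if 0 < t then
    dadd (dsub (P1 ((ln (2 * t) / q)%:E) phi) (P1 ((- ln (2 * t) / q)%:E) phi))
         (Iop phi)
  else P2 +oo%E phi.

Definition is_RS_integral (phi : R -> R) (alpha : R -> R[i]) (a b : R)
    (I : R[i]) : Prop :=
  forall eps : R, 0 < eps -> exists2 delta : R, 0 < delta &
    forall (n : nat) (x xi : nat -> R),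
      x 0%N = a -> x n = b ->
      (forall i : nat, (i < n)%N ->
          x i <= xi i <= x i.+1 /\ x i.+1 - x i < delta) ->
      Normc.normc (\sum_(i < n) ((phi (xi i))%:C * (alpha (x i.+1) - alpha (x i)))
             - I) < eps.

End TouchingDisks.

(* Main.v *)
Require Import Defs.
From HB Require Import structures.
From mathcomp Require Import all_boot all_order all_algebra.
From mathcomp Require Import all_classical all_reals all_analysis.
From mathcomp Require Import complex.
From mathcomp Require Import measurable_realfun lebesgue_integrable lebesgue_Rintegral lebesgue_integral_nonneg.
From mathcomp Require Import ring lra.
Require Import Defs.
Import Order.TTheory GRing.Theory Num.Theory.
Import numFieldNormedType.Exports.
Local Open Scope classical_set_scope.
Local Open Scope ring_scope.
Section S.
Variable R : realType.
Local Open Scope complex_scope.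

Definition sj (q k : R) (j : 'I_2) : R :=
  if j == 0 then (1 / (2 * `|k|)) * (1 - expR (- (`|k| * q)))
  else (1 / (2 * `|k|)) * (1 + expR (- (`|k| * q))).

Lemma form_exp (q : R) (psi phi : dens R) (k : R) :
  form q psi phi k = \sum_(j < 2) psi k j ord0 * (sj q k j)%:C * conjc (phi k j ord0).
Proof.
rewrite /form !mxE; apply: eq_bigr => j _.
rewrite !mxE (bigD1 j) //= big1 ?addr0.
  rewrite !mxE eqxx /sj; case: (j == 0) => //.
move=> l lj; rewrite !mxE (negbTE lj) mulr0 //.
Qed.

Definition ee (q : R) (j : 'I_2) (t k : R) : R :=
  if t < 0 then (if j == 0 then 0 else chi ((- ln (- (2 * t)) / q)%:E) k - chi ((ln (- (2 * t)) / q)%:E) k)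
  else if 0 < t then (if j == 0 then chi ((ln (2 * t) / q)%:E) k - chi ((- ln (2 * t) / q)%:E) k + chi +oo%E k
     else chi +oo%E k)
  else (if j == 0 then 0 else chi +oo%E k).

Lemma Efam_entry (q t : R) (g : dens R) (k : R) (j : 'I_2) :
  Efam q t g k j ord0 = (ee q j t k)%:C * g k j ord0.
Proof.
rewrite /Efam /ee /dsub /dadd /Iop /P1 /P2.
case: ifP => _; [|case: ifP => _]; rewrite !mxE; case: (j == 0);
  rewrite ?rmorphB ?rmorphD ?rmorphN ?mul0r ?subrr ?addr0 ?add0r ?mulrBl ?mulrDl ?mulNr //.
Qed.

Definition lam (q : R) (j : 'I_2) (k : R) : R :=
  if j == 0 then 1 / 2 * expR (- (`|k| * q)) else - (1 / 2 * expR (- (`|k| * q))).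

Lemma Kop_entry (q : R) (g : dens R) (k : R) (j : 'I_2) :
  Kop q g k j ord0 = (lam q j k)%:C * g k j ord0.
Proof.
rewrite /Kop /Kmx /lam !mxE (bigD1 j) //= big1 ?addr0.
  by rewrite !mxE eqxx; case: (j == 0).
by move=> l lj; rewrite !mxE eq_sym (negbTE lj) mul0r.
Qed.

Definition hc (q : R) (f g : dens R) (j : 'I_2) (k : R) : R[i] :=
  f k j ord0 * (sj q k j)%:C * conjc (g k j ord0).

Lemma conj_scal (x : R) (z : R[i]) : conjc (x%:C * z) = x%:C * conjc z.
Proof. by case: z => a b /=; congr Complex; ring. Qed.

Lemma form_scal (q : R) (f g : dens R) (w : 'I_2 -> R -> R) (phi : dens R) (k : R) :
  (forall j, phi k j ord0 = (w j k)%:C * g k j ord0) ->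
  form q f phi k = \sum_(j < 2) (w j k)%:C * hc q f g j k.
Proof.
move=> H; rewrite form_exp; apply: eq_bigr => j _.
rewrite H conj_scal /hc; ring.
Qed.

Lemma Re_scal (x : R) (z : R[i]) : complex.Re (x%:C * z) = x * complex.Re z.
Proof. by case: z => a b /=; ring. Qed.
Lemma Im_scal (x : R) (z : R[i]) : complex.Im (x%:C * z) = x * complex.Im z.
Proof. by case: z => a b /=; ring. Qed.
Lemma ReD (z w : R[i]) : complex.Re (z + w) = complex.Re z + complex.Re w.
Proof. by case: z; case: w. Qed.
Lemma ImD (z w : R[i]) : complex.Im (z + w) = complex.Im z + complex.Im w.
Proof. by case: z; case: w. Qed.
Lemma ReB (z w : R[i]) : complex.Re (z - w) = complex.Re z - complex.Re w.
Proof. by case: z; case: w. Qed.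
Lemma ImB (z w : R[i]) : complex.Im (z - w) = complex.Im z - complex.Im w.
Proof. by case: z; case: w. Qed.

Lemma Re_hc (q : R) (f g : dens R) j k : complex.Re (hc q f g j k) =
  sj q k j * (complex.Re (f k j ord0) * complex.Re (g k j ord0) + complex.Im (f k j ord0) * complex.Im (g k j ord0)).
Proof. rewrite /hc; case: (f k j ord0) => a b; case: (g k j ord0) => c d /=; ring. Qed.
Lemma Im_hc (q : R) (f g : dens R) j k : complex.Im (hc q f g j k) =
  sj q k j * (complex.Im (f k j ord0) * complex.Re (g k j ord0) - complex.Re (f k j ord0) * complex.Im (g k j ord0)).
Proof. rewrite /hc; case: (f k j ord0) => a b; case: (g k j ord0) => c d /=; ring. Qed.

Lemma o0 : (ord0 : 'I_2) = 0. Proof. exact: val_inj. Qed.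
Lemma o1 : (lift ord0 ord0 : 'I_2) = 1. Proof. exact: val_inj. Qed.

Lemma Re_form (q : R) (f g : dens R) (w : 'I_2 -> R -> R) (phi : dens R) (k : R) :
  (forall j, phi k j ord0 = (w j k)%:C * g k j ord0) ->
  complex.Re (form q f phi k) = w 0 k * complex.Re (hc q f g 0 k) + w 1 k * complex.Re (hc q f g 1 k).
Proof. by move=> H; rewrite (@form_scal q f g w phi k H) !big_ord_recl big_ord0 addr0 ReD !Re_scal o0 o1. Qed.
Lemma Im_form (q : R) (f g : dens R) (w : 'I_2 -> R -> R) (phi : dens R) (k : R) :
  (forall j, phi k j ord0 = (w j k)%:C * g k j ord0) ->
  complex.Im (form q f phi k) = w 0 k * complex.Im (hc q f g 0 k) + w 1 k * complex.Im (hc q f g 1 k).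
Proof. by move=> H; rewrite (@form_scal q f g w phi k H) !big_ord_recl big_ord0 addr0 ImD !Im_scal o0 o1. Qed.

Lemma Re_form_ff (q : R) (f : dens R) (k : R) :
  complex.Re (form q f f k) = sj q k 0 * (complex.Re (f k 0 ord0) ^+ 2 + complex.Im (f k 0 ord0) ^+ 2)
                    + sj q k 1 * (complex.Re (f k 1 ord0) ^+ 2 + complex.Im (f k 1 ord0) ^+ 2).
Proof.
rewrite (@Re_form q f f (fun _ _ => 1)) ?mul1r ?Re_hc //; last by move=> j; rewrite mul1r.
Qed.

Notation mu := (@lebesgue_measure R).
Definition Rint (h : R -> R) : R := Rintegral mu setT h.
Definition intg (h : R -> R) : Prop := mu.-integrable setT (EFin \o h).

Lemma mes_inv : measurable_fun [set: R] (fun k : R => 1 / (2 * `|k|)).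
Proof.
rewrite (_ : (fun k : R => 1 / (2 * `|k|)) = fun k => if k == 0 then 0 else 1 / (2 * `|k|)); last first.
  by apply/funext => k; case: eqP => // ->; rewrite normr0 mulr0 invr0 mulr0.
apply: measurable_fun_if => //.
  by apply: measurable_fun_eqr.
rewrite setTI (_ : _ @^-1` _ = [set x | x != 0]); last first.
  by apply/seteqP; split => x /=; case: eqP.
apply: open_continuous_measurable_fun; first exact: open_neq.
move=> x; rewrite inE /= => x0.
apply: (continuousM (s:=cst 1) (t:=fun k : R => (2 * `|k|)^-1)); first exact: cst_continuous.
apply: (continuousV (s:=fun k : R => (2 * `|k|))); first by rewrite mulf_neq0 // normr_eq0.
apply: (continuousM (s:=cst 2) (t:=fun k : R => `|k|)); first exact: cst_continuous.
exact: norm_continuous.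
Qed.

Lemma mes_ex (q : R) : measurable_fun [set: R] (fun k : R => expR (- (`|k| * q))).
Proof.
apply: measurableT_comp => //; apply: measurable_funN.
by apply: measurable_funM => //.
Qed.

Lemma mes_sj (q : R) (j : 'I_2) : measurable_fun [set: R] (fun k => sj q k j).
Proof.
rewrite /sj; case: (j == 0); apply: measurable_funM; try exact: mes_inv.
  by apply: measurable_funB => //; exact: mes_ex.
by apply: measurable_funD => //; exact: mes_ex.
Qed.

Lemma mes_lam (q : R) (j : 'I_2) : measurable_fun [set: R] (lam q j).
Proof.
rewrite /lam; case: (j == 0).
  by apply: measurable_funM => //; exact: mes_ex.
apply: measurable_funN; apply: measurable_funM => //; exact: mes_ex.
Qed.

Lemma lam_bd (q : R) (j : 'I_2) k : 0 <= q -> `|lam q j k| <= 1.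
Proof.
move=> q0; have h0 : 0 < expR (- (`|k| * q)) by rewrite expR_gt0.
have h1 : expR (- (`|k| * q)) <= 1.
  by rewrite -expR0 ler_expR lerNl oppr0 mulr_ge0.
rewrite /lam; case: (j == 0); rewrite ?normrN ger0_norm; try lra.
Qed.

Lemma sj_ge0 (q : R) (j : 'I_2) k : 0 <= q -> 0 <= sj q k j.
Proof.
move=> q0; have h0 : 0 < expR (- (`|k| * q)) by rewrite expR_gt0.
have h1 : expR (- (`|k| * q)) <= 1.
  by rewrite -expR0 ler_expR lerNl oppr0 mulr_ge0.
have h2 : 0 <= 1 / (2 * `|k|) by rewrite divr_ge0 // mulr_ge0.
rewrite /sj; case: (j == 0); apply: mulr_ge0 => //; lra.
Qed.

Lemma I2_cases (j : 'I_2) : j = 0 \/ j = 1.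
Proof.
case: j => [[|[|m]]] H; [left|right|by []]; exact: val_inj.
Qed.

Lemma mes_Pf (q : R) (f : dens R) : inK0 q f ->
  measurable_fun [set: R] (fun k => complex.Re (form q f f k)).
Proof.
move=> [mf _].
rewrite (_ : (fun k => _) = fun k => sj q k 0 * (complex.Re (f k 0 ord0) ^+ 2 + complex.Im (f k 0 ord0) ^+ 2)
                    + sj q k 1 * (complex.Re (f k 1 ord0) ^+ 2 + complex.Im (f k 1 ord0) ^+ 2)); last first.
  by apply/funext => k; rewrite Re_form_ff.
have [m0r m0i] := mf 0; have [m1r m1i] := mf 1.
apply: measurable_funD; apply: measurable_funM; try exact: mes_sj;
  apply: measurable_funD; exact: measurable_funX.
Qed.

Lemma Pf_ge0 (q : R) (f : dens R) k : 0 <= q -> 0 <= complex.Re (form q f f k).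
Proof.
move=> q0; rewrite Re_form_ff; apply: addr_ge0; apply: mulr_ge0; try exact: sj_ge0;
  apply: addr_ge0; exact: sqr_ge0.
Qed.

Lemma intg_Pf (q : R) (f : dens R) : 0 <= q -> inK0 q f -> intg (fun k => complex.Re (form q f f k)).
Proof.
move=> q0 hf; apply/integrableP; split.
  by apply/measurable_EFinP; exact: mes_Pf.
case: hf => _ hf; apply: le_lt_trans hf; rewrite le_eqVlt; apply/orP; left; apply/eqP.
by apply: eq_integral => k _ /=; rewrite ger0_norm //; exact: Pf_ge0.
Qed.

Lemma mesT (f : R -> R) : measurable_fun [set: R] f ->
  measurable_fun (T := measurableTypeR R) (U := R) [set: measurableTypeR R] f.
Proof. by []. Qed.

Lemma mesT2 (f : R -> R) : measurable_fun (T := measurableTypeR R) (U := R) [set: measurableTypeR R] f ->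
  measurable_fun [set: R] f.
Proof. by []. Qed.

Lemma mesE (f : R -> R) : measurable_fun [set: R] f ->
  measurable_fun (T := measurableTypeR R) [set: measurableTypeR R] (EFin \o f).
Proof. by move=> mf; apply: measurableT_comp => //; exact: mesT. Qed.

Lemma intM (H w : R -> R) (M : R) : intg H -> measurable_fun [set: R] w ->
  (forall k, `|w k| <= M) -> intg (fun k => w k * H k).
Proof.
move=> iH mw wM.
have hb : [bounded w x | x in [set: R]].
  exists M; split; first exact: num_real.
  by move=> y My x _; apply: le_trans (wM x) (ltW My).
have := integrableMr measurableT (mesT _ mw) hb iH.
rewrite /intg (_ : (EFin \o (fun k => w k * H k)) = ((EFin \o w) \* (EFin \o H))%E) //.
Qed.

Lemma intD (a b : R -> R) : intg a -> intg b -> intg (fun k => a k + b k).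
Proof.
move=> ia ib; rewrite /intg (_ : (EFin \o (fun k => (a k + b k)%R)) = ((EFin \o a) \+ (EFin \o b))%E).
  exact: integrableD.
by apply/funext => k /=; rewrite EFinD.
Qed.

Lemma intZ (c : R) (a : R -> R) : intg a -> intg (fun k => c * a k).
Proof.
move=> ia; rewrite /intg (_ : (EFin \o (fun k => (c * a k)%R)) = (fun k => c%:E * (EFin \o a) k)%E).
  exact: integrableZl.
by apply/funext => k /=; rewrite EFinM.
Qed.

Lemma intB (a b : R -> R) : intg a -> intg b -> intg (fun k => a k - b k).
Proof.
move=> ia ib; have := intD _ _ ia (intZ (-1) _ ib).
by congr intg; apply/funext => k; rewrite mulN1r.
Qed.

Lemma intg_hc (q : R) (f g : dens R) (j : 'I_2) : 0 <= q -> inK0 q f -> inK0 q g ->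
  intg (fun k => complex.Re (hc q f g j k)) /\ intg (fun k => complex.Im (hc q f g j k)).
Proof.
move=> q0 hf hg.
have iP := intD _ _ (intg_Pf _ _ q0 hf) (intg_Pf _ _ q0 hg).
have [mfr mfi] := hf.1 j; have [mgr mgi] := hg.1 j.
have bnd : forall k, sj q k j * (complex.Re (f k j ord0) ^+ 2 + complex.Im (f k j ord0) ^+ 2)
   + sj q k j * (complex.Re (g k j ord0) ^+ 2 + complex.Im (g k j ord0) ^+ 2) <=
   complex.Re (form q f f k) + complex.Re (form q g g k).
  move=> k; rewrite !Re_form_ff.
  have := sj_ge0 q 0 k q0; have := sj_ge0 q 1 k q0.
  have := sqr_ge0 (complex.Re (f k 0 ord0)); have := sqr_ge0 (complex.Im (f k 0 ord0)).
  have := sqr_ge0 (complex.Re (f k 1 ord0)); have := sqr_ge0 (complex.Im (f k 1 ord0)).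
  have := sqr_ge0 (complex.Re (g k 0 ord0)); have := sqr_ge0 (complex.Im (g k 0 ord0)).
  have := sqr_ge0 (complex.Re (g k 1 ord0)); have := sqr_ge0 (complex.Im (g k 1 ord0)).
  case: (I2_cases j) => ->; nra.
rewrite /intg; split; (apply: le_integrable iP => //=; [apply: mesE|move=> k _]).
- under eq_fun do rewrite Re_hc.
  apply: measurable_funM; first exact: mes_sj.
  by apply: measurable_funD; apply: measurable_funM.
- rewrite lee_fin Re_hc (ger0_norm (addr_ge0 (Pf_ge0 _ _ _ q0) (Pf_ge0 _ _ _ q0))).
  apply: le_trans (bnd k); have := sj_ge0 q j k q0.
  set s := sj q k j; set a := complex.Re (f k j ord0); set b := complex.Im (f k j ord0);
  set c := complex.Re (g k j ord0); set d := complex.Im (g k j ord0) => s0.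
  rewrite normrM ger0_norm // -mulrDr; apply: ler_wpM2l => //; have := sqr_ge0 (a - c); have := sqr_ge0 (b - d); have := sqr_ge0 (a + c); have := sqr_ge0 (b + d); have := sqr_ge0 (b - c); have := sqr_ge0 (a - d); have := sqr_ge0 (b + c); have := sqr_ge0 (a + d); rewrite ler_norml; move=> *; apply/andP; split; nra.
- under eq_fun do rewrite Im_hc.
  apply: measurable_funM; first exact: mes_sj.
  by apply: measurable_funB; apply: measurable_funM.
- rewrite lee_fin Im_hc (ger0_norm (addr_ge0 (Pf_ge0 _ _ _ q0) (Pf_ge0 _ _ _ q0))).
  apply: le_trans (bnd k); have := sj_ge0 q j k q0.
  set s := sj q k j; set a := complex.Re (f k j ord0); set b := complex.Im (f k j ord0);
  set c := complex.Re (g k j ord0); set d := complex.Im (g k j ord0) => s0.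
  rewrite normrM ger0_norm // -mulrDr; apply: ler_wpM2l => //; have := sqr_ge0 (a - c); have := sqr_ge0 (b - d); have := sqr_ge0 (a + c); have := sqr_ge0 (b + d); have := sqr_ge0 (b - c); have := sqr_ge0 (a - d); have := sqr_ge0 (b + c); have := sqr_ge0 (a + d); rewrite ler_norml; move=> *; apply/andP; split; nra.
Qed.

Lemma mono_x (n : nat) (x xi : nat -> R) (d : R) :
  (forall i, (i < n)%N -> x i <= xi i <= x i.+1 /\ x i.+1 - x i < d) ->
  forall i j, (i <= j)%N -> (j <= n)%N -> x i <= x j.
Proof.
move=> hp i; elim=> [|j IH] hij hjn.
  by have -> : i = 0%N by apply/eqP; rewrite -leqn0.
move: hij; rewrite leq_eqVlt => /orP[/eqP ->//|hij].
have [h _] := hp j hjn; apply: le_trans (IH hij (ltnW hjn)) _.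
by case/andP: h => h1 h2; apply: le_trans h1 h2.
Qed.

Lemma comb (n : nat) (x xi : nat -> R) (d a b l : R) (e : R -> R) (flag : bool) :
  x 0%N = a -> x n = b ->
  (forall i, (i < n)%N -> x i <= xi i <= x i.+1 /\ x i.+1 - x i < d) ->
  (forall t, a <= t <= b -> e t = if (if flag then l < t else l <= t) then 1 else 0) ->
  e a = 0 -> e b = 1 ->
  `|\sum_(i < n) xi i * (e (x i.+1) - e (x i)) - l| <= d.
Proof.
move=> x0 xn hp he ea eb.
have xin : forall i, (i <= n)%N -> a <= x i <= b.
  move=> i hi; rewrite -x0 -xn; apply/andP; split; apply: (mono_x _ _ _ _ hp) => //.
have tele : \sum_(i < n) (e (x i.+1) - e (x i)) = 1.
  rewrite -(big_mkord xpredT (fun i => e (x i.+1) - e (x i))).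
  by rewrite telescope_sumr // xn x0 eb ea subr0.
have -> : l = \sum_(i < n) l * (e (x i.+1) - e (x i)) by rewrite -mulr_sumr tele mulr1.
rewrite -sumrB; apply: le_trans (ler_norm_sum _ _ _) _.
rewrite -[leRHS]mulr1 -tele mulr_sumr; apply: ler_sum => -[i hi] _ /=.
have [hxi hd] := hp i hi.
have hxx : x i <= x i.+1 by case/andP: hxi => h1 h2; apply: le_trans h1 h2.
rewrite (he _ (xin i (ltnW hi))) (he _ (xin i.+1 hi)).
case/andP: hxi => h1 h2.
clear he; case: flag.
  case: (ltrP l (x i)) => c1; case: (ltrP l (x i.+1)) => c2;
    rewrite ?subrr ?mulr0 ?normr0 ?subr0 // ler_norml; apply/andP; split; lra.
case: (lerP l (x i)) => c1; case: (lerP l (x i.+1)) => c2;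
  rewrite ?subrr ?mulr0 ?normr0 ?subr0 // ler_norml; apply/andP; split; lra.
Qed.

Lemma key1 (H : R -> R) (e : R -> R -> R) (l : R -> R) (n : nat) (x xi : nat -> R) (d : R) :
  intg H -> (forall i, (i <= n)%N -> measurable_fun [set: R] (e (x i)) /\ forall k, `|e (x i) k| <= 2) ->
  measurable_fun [set: R] l -> (forall k, `|l k| <= 1) ->
  (forall k, `|\sum_(i < n) xi i * (e (x i.+1) k - e (x i) k) - l k| <= d) ->
  `|\sum_(i < n) xi i * (Rint (fun k => e (x i.+1) k * H k) - Rint (fun k => e (x i) k * H k))
     - Rint (fun k => l k * H k)| <= d * Rint (fun k => `|H k|).
Proof.
move=> iH he ml hl hd.
pose W m k := \sum_(i < m) xi i * (e (x i.+1) k - e (x i) k).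
have iE : forall i, (i <= n)%N -> intg (fun k => e (x i) k * H k).
  by move=> i hi; have [m b] := he i hi; exact: (intM _ _ 2 iH m b).
have step : forall m, (m <= n)%N -> intg (fun k => W m k * H k) /\
   \sum_(i < m) xi i * (Rint (fun k => e (x i.+1) k * H k) - Rint (fun k => e (x i) k * H k))
   = Rint (fun k => W m k * H k).
  elim=> [|m IH] hm.
    have -> : (fun k => W 0%N k * H k) = (fun k => 0 * H k).
      by apply/funext => k; rewrite /W big_ord0.
    split; first exact: intZ.
    by rewrite big_ord0 /Rint RintegralZl // mul0r.
  have [i1 e1] := IH (ltnW hm).
  have iA := iE m.+1 hm; have iB := iE m (ltnW hm).
  have -> : (fun k => W m.+1 k * H k) =
     (fun k => W m k * H k + (xi m * (e (x m.+1) k * H k) - xi m * (e (x m) k * H k))).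
    by apply/funext => k; rewrite /W big_ord_recr /=; ring.
  split; first by apply: intD => //; apply: intB; apply: intZ.
  rewrite big_ord_recr /= e1 /Rint RintegralD //; last by apply: intB; apply: intZ.
  rewrite RintegralB //; try exact: intZ.
  by rewrite !RintegralZl //; ring.
have [iW eW] := step n (leqnn n).
have iL : intg (fun k => l k * H k) by exact: (intM _ _ 1 iH ml hl).
have iD : intg (fun k => (W n k - l k) * H k).
  have -> : (fun k => (W n k - l k) * H k) = (fun k => W n k * H k - l k * H k).
    by apply/funext => k; ring.
  exact: intB.
rewrite eW /Rint -RintegralB //.
have -> : (fun k => W n k * H k - l k * H k) = (fun k => (W n k - l k) * H k).
  by apply/funext => k; ring.
apply: le_trans (le_normr_Rintegral _ _) _ => //.
rewrite -RintegralZl //; last exact: integrable_norm.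
apply: le_Rintegral => //.
- exact: integrable_norm iD.
- exact: intZ (integrable_norm iH).
move=> k _; rewrite normrM; apply: ler_wpM2r => //; exact: hd.
Qed.

Lemma chi_fin (v k : R) : chi (v%:E) k = if k <= v then 1 else 0.
Proof. by rewrite /chi lee_fin. Qed.
Lemma chi_y (k : R) : chi +oo%E k = 1.
Proof. by rewrite /chi leey. Qed.

Lemma mes_chi (s : \bar R) : measurable_fun [set: R] (chi s).
Proof.
case: s => [v| |].
- rewrite (_ : chi _ = fun k => if k <= v then 1 else 0); last by apply/funext => k; rewrite chi_fin.
  by apply: measurable_fun_ifT => //; apply: measurable_fun_ler.
- by rewrite (_ : chi _ = cst 1) //; apply/funext => k; rewrite chi_y.
- rewrite (_ : chi _ = cst 0) //; apply/funext => k; by rewrite /chi.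
Qed.

Lemma mes_ee (q t : R) (j : 'I_2) : measurable_fun [set: R] (ee q j t).
Proof.
rewrite /ee; case: (t < 0); [|case: (0 < t)]; case: (j == 0);
 repeat (first [exact: mes_chi | exact: measurable_cst | apply: measurable_funD | apply: measurable_funB | apply: measurable_funN]).
Qed.

Lemma le_lnq (q y k : R) : 0 < q -> 0 < y -> (k <= ln y / q) = (expR (k * q) <= y).
Proof. by move=> q0 y0; rewrite ler_pdivlMr // -[k * q <= _]ler_expR lnK // posrE. Qed.

Lemma le_mlnq (q y k : R) : 0 < q -> 0 < y -> (k <= - ln y / q) = (y <= expR (- (k * q))).
Proof. by move=> q0 y0; rewrite ler_pdivlMr // lerNr -[ln y <= _]ler_expR lnK // posrE. Qed.

Lemma thr0 (q t k : R) : 0 < q -> - (1/2) <= t <= 1/2 ->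
  ee q 0 t k = if (if 0 < k then lam q 0 k < t else lam q 0 k <= t) then 1 else 0.
Proof.
move=> q0 /andP[ta tb].
have hA := expR_gt0 (k * q); have hB := expR_gt0 (- (k * q)).
rewrite /ee /lam eqxx.
case: ifP => t0.
  have hE := expR_gt0 (- (`|k| * q)).
  case: (ltrP 0 k) => _; [case: (ltrP (1/2 * expR (- (`|k| * q))) t)|case: (lerP (1/2 * expR (- (`|k| * q))) t)] => c; lra.
case: ifP => t1; last first.
  have hE := expR_gt0 (- (`|k| * q)).
  have t00 : t = 0 by apply/eqP; rewrite eq_le !leNgt t0 t1.
  case: (ltrP 0 k) => _; [case: (ltrP (1/2 * expR (- (`|k| * q))) t)|case: (lerP (1/2 * expR (- (`|k| * q))) t)] => c; lra.
have t2 : 0 < 2 * t by lra.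
rewrite !chi_fin chi_y le_lnq // le_mlnq //.
case: (ltrP 0 k) => k0.
  rewrite gtr0_norm //.
  have A1 : 1 < expR (k * q) by rewrite expR_gt1 mulr_gt0.
  have B1 : expR (- (k * q)) < 1 by rewrite expR_lt1 oppr_lt0 mulr_gt0.
  case: (lerP (expR (k * q)) (2 * t)) => c1; case: (lerP (2 * t) (expR (- (k * q)))) => c2;
    case: (ltrP (1 / 2 * expR (- (k * q))) t) => c3; lra.
rewrite ler0_norm // mulNr opprK.
have A1 : expR (k * q) <= 1 by rewrite expR_le1 mulr_le0_ge0 // ltW.
have B1 : 1 <= expR (- (k * q)) by rewrite -expR0 ler_expR oppr_ge0 mulr_le0_ge0 // ltW.
case: (lerP (expR (k * q)) (2 * t)) => c1; case: (lerP (2 * t) (expR (- (k * q)))) => c2;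
  case: (lerP (1 / 2 * expR (k * q)) t) => c3; lra.
Qed.

Lemma thr1 (q t k : R) : 0 < q -> - (1/2) <= t <= 1/2 ->
  ee q 1 t k = if (if k <= 0 then lam q 1 k < t else lam q 1 k <= t) then 1 else 0.
Proof.
move=> q0 /andP[ta tb].
have hA := expR_gt0 (k * q); have hB := expR_gt0 (- (k * q)).
rewrite /ee /lam /=.
case: ifP => t0; last first.
  have hE := expR_gt0 (- (`|k| * q)).
  have t00 : 0 <= t by rewrite leNgt t0.
  rewrite chi_y; case: ifP => _;
  (case: (lerP k 0) => _; [case: (ltrP (- (1/2 * expR (- (`|k| * q)))) t)|case: (lerP (- (1/2 * expR (- (`|k| * q)))) t)] => c; lra).
have t2 : 0 < - (2 * t) by lra.
rewrite !chi_fin le_lnq // le_mlnq //.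
case: (lerP k 0) => k0.
  rewrite ler0_norm // mulNr opprK.
  have A1 : expR (k * q) <= 1 by rewrite expR_le1 mulr_le0_ge0 // ltW.
  have B1 : 1 <= expR (- (k * q)) by rewrite -expR0 ler_expR oppr_ge0 mulr_le0_ge0 // ltW.
  case: (lerP (expR (k * q)) (- (2 * t))) => c1; case: (lerP (- (2 * t)) (expR (- (k * q)))) => c2;
    case: (ltrP (- (1 / 2 * expR (k * q))) t) => c3; lra.
rewrite gtr0_norm //.
have A1 : 1 < expR (k * q) by rewrite expR_gt1 mulr_gt0.
have B1 : expR (- (k * q)) < 1 by rewrite expR_lt1 oppr_lt0 mulr_gt0.
case: (lerP (expR (k * q)) (- (2 * t))) => c1; case: (lerP (- (2 * t)) (expR (- (k * q)))) => c2;
  case: (lerP (- (1 / 2 * expR (- (k * q)))) t) => c3; lra.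
Qed.

Lemma ee_bd (q t k : R) (j : 'I_2) : `|ee q j t k| <= 2.
Proof.
rewrite /ee /chi; case: (t < 0); [|case: (0 < t)]; case: (j == 0);
  repeat case: ifP => _; rewrite ler_norml; apply/andP; split; lra.
Qed.

Lemma ee_end (q k : R) (j : 'I_2) : 0 < q -> ee q j (- (1/2)) k = 0 /\ ee q j (1/2) k = 1.
Proof.
move=> q0.
have hE := expR_gt0 (- (`|k| * q)).
have hE1 : expR (- (`|k| * q)) <= 1.
  by rewrite -expR0 ler_expR lerNl oppr0 mulr_ge0 // ltW.
have ha : forall t : R, t = - (1/2) -> - (1/2) <= t <= 1/2.
  by move=> t ->; apply/andP; split; lra.
have hb : forall t : R, t = 1/2 -> - (1/2) <= t <= 1/2.
  by move=> t ->; apply/andP; split; lra.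
case: (I2_cases j) => ->.
  rewrite (thr0 _ _ _ q0 (ha _ erefl)) (thr0 _ _ _ q0 (hb _ erefl)) /lam eqxx.
  case: (ltrP 0 k) => k0.
    have hE2 : expR (- (`|k| * q)) < 1.
      by rewrite expR_lt1 oppr_lt0 mulr_gt0 // normr_gt0 gt_eqF.
    by rewrite ifF ?ifT //; lra.
  by rewrite ifF ?ifT //; lra.
rewrite (thr1 _ _ _ q0 (ha _ erefl)) (thr1 _ _ _ q0 (hb _ erefl)) /lam /=.
case: (lerP k 0) => k0.
  by rewrite ifF ?ifT //; lra.
have hE2 : expR (- (`|k| * q)) < 1.
  by rewrite expR_lt1 oppr_lt0 mulr_gt0 // normr_gt0 gt_eqF.
by rewrite ifF ?ifT //; lra.
Qed.

Lemma pointwise (q d k : R) (j : 'I_2) (n : nat) (x xi : nat -> R) : 0 < q ->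
  x 0%N = - (1/2) -> x n = 1/2 ->
  (forall i, (i < n)%N -> x i <= xi i <= x i.+1 /\ x i.+1 - x i < d) ->
  `|\sum_(i < n) xi i * (ee q j (x i.+1) k - ee q j (x i) k) - lam q j k| <= d.
Proof.
move=> q0 x0 xn hp.
case: (I2_cases j) => ->.
  have [ea eb] := ee_end q k 0 q0.
  apply: (comb _ _ _ _ _ _ _ (fun t => ee q 0 t k) (0 < k) x0 xn hp) => //.
  by move=> t ht; exact: (thr0 q t k q0 ht).
have [ea eb] := ee_end q k 1 q0.
apply: (comb _ _ _ _ _ _ _ (fun t => ee q 1 t k) (k <= 0) x0 xn hp) => //.
by move=> t ht; exact: (thr1 q t k q0 ht).
Qed.

Lemma ipW (q : R) (f g phi : dens R) (w : 'I_2 -> R -> R) (M : R) : 0 <= q -> inK0 q f -> inK0 q g ->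
  (forall j, measurable_fun [set: R] (w j)) -> (forall j k, `|w j k| <= M) ->
  (forall k j, phi k j ord0 = (w j k)%:C * g k j ord0) ->
  ip q f phi = (Rint (fun k => w 0 k * complex.Re (hc q f g 0 k)) + Rint (fun k => w 1 k * complex.Re (hc q f g 1 k)))
     +i* (Rint (fun k => w 0 k * complex.Im (hc q f g 0 k)) + Rint (fun k => w 1 k * complex.Im (hc q f g 1 k))).
Proof.
move=> q0 hf hg mw bw hphi.
have [r0 i0] := intg_hc q f g 0 q0 hf hg; have [r1 i1] := intg_hc q f g 1 q0 hf hg.
rewrite /ip /cint; congr Complex.
  transitivity (Rint (fun k => w 0 k * complex.Re (hc q f g 0 k) + w 1 k * complex.Re (hc q f g 1 k))).
    by apply: eq_Rintegral => k _; rewrite (@Re_form q f g w phi k (hphi k)).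
  by apply: RintegralD => //; apply: (intM _ _ M) => //.
transitivity (Rint (fun k => w 0 k * complex.Im (hc q f g 0 k) + w 1 k * complex.Im (hc q f g 1 k))).
  by apply: eq_Rintegral => k _; rewrite (@Im_form q f g w phi k (hphi k)).
by apply: RintegralD => //; apply: (intM _ _ M) => //.
Qed.

Lemma ReS (n : nat) (F : 'I_n -> R[i]) : complex.Re (\sum_(i < n) F i) = \sum_(i < n) complex.Re (F i).
Proof.
elim: n F => [|n IH] F; first by rewrite !big_ord0.
by rewrite !big_ord_recr ReD IH.
Qed.
Lemma ImS (n : nat) (F : 'I_n -> R[i]) : complex.Im (\sum_(i < n) F i) = \sum_(i < n) complex.Im (F i).
Proof.
elim: n F => [|n IH] F; first by rewrite !big_ord0.
by rewrite !big_ord_recr ImD IH.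
Qed.

Lemma ReZ (n : nat) (xi : nat -> R) (F : nat -> R[i]) (K : R[i]) :
  complex.Re (\sum_(i < n) (xi i)%:C * (F i.+1 - F i) - K) =
  \sum_(i < n) xi i * (complex.Re (F i.+1) - complex.Re (F i)) - complex.Re K.
Proof.
rewrite ReB ReS; congr (_ - _); apply: eq_bigr => i _; by rewrite Re_scal ReB.
Qed.
Lemma ImZ (n : nat) (xi : nat -> R) (F : nat -> R[i]) (K : R[i]) :
  complex.Im (\sum_(i < n) (xi i)%:C * (F i.+1 - F i) - K) =
  \sum_(i < n) xi i * (complex.Im (F i.+1) - complex.Im (F i)) - complex.Im K.
Proof.
rewrite ImB ImS; congr (_ - _); apply: eq_bigr => i _; by rewrite Im_scal ImB.
Qed.

Lemma split2 (n : nat) (xi a b : nat -> R) (ka kb : R) :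
  \sum_(i < n) xi i * ((a i.+1 + b i.+1) - (a i + b i)) - (ka + kb) =
  (\sum_(i < n) xi i * (a i.+1 - a i) - ka) + (\sum_(i < n) xi i * (b i.+1 - b i) - kb).
Proof.
rewrite (eq_bigr (fun i : 'I_n => xi i * (a i.+1 - a i) + xi i * (b i.+1 - b i))).
  by rewrite big_split /=; ring.
by move=> i _; ring.
Qed.

Lemma normc_le (z : R[i]) : Normc.normc z <= `|complex.Re z| + `|complex.Im z|.
Proof.
case: z => a b /=.
have h0 : 0 <= `|a| + `|b| by apply: addr_ge0.
rewrite -[leRHS](ger0_norm h0) -[leRHS]sqrtr_sqr ler_sqrt; last exact: sqr_ge0.
have ea : `|a| ^+ 2 = a ^+ 2 by rewrite -normrX ger0_norm // sqr_ge0.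
have eb : `|b| ^+ 2 = b ^+ 2 by rewrite -normrX ger0_norm // sqr_ge0.
rewrite sqrrD ea eb.
have := mulr_ge0 (normr_ge0 a) (normr_ge0 b); lra.
Qed.
End S.

Arguments Rint {R}.
Arguments intg {R}.
Arguments hc {R}.
Arguments ee {R}.
Arguments lam {R}.
Arguments sj {R}.
Arguments intg_hc {R}.
Arguments ipW {R}.
Arguments mes_ee {R}.
Arguments ee_bd {R}.
Arguments Efam_entry {R}.
Arguments mes_lam {R}.
Arguments lam_bd {R}.
Arguments Kop_entry {R}.
Arguments key1 {R}.
Arguments pointwise {R}.
Arguments normc_le {R}.
Arguments ReZ {R}.
Arguments ImZ {R}.
Arguments split2 {R}.

Theorem theorem4p4 (R : realType) (Rad r : R) :
  0 < Rad -> 0 < r ->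
  forall f g : dens R,
    inK0 (q1 r Rad) f -> inK0 (q1 r Rad) g ->
    is_RS_integral (fun t : R => t)
      (fun t : R => ip (q1 r Rad) f (Efam (q1 r Rad) t g))
      (- (1 / 2)) (1 / 2)
      (ip (q1 r Rad) f (Kop (q1 r Rad) g)).
Proof.
move=> hR hr f g.
set q := q1 r Rad => hf hg.
have q0 : 0 < q by rewrite /q /q1; apply: addr_gt0; apply: divr_gt0 => //; apply: mulr_gt0.
have q0' := ltW q0.
have [r0 i0] := intg_hc q f g 0 q0' hf hg; have [r1 i1] := intg_hc q f g 1 q0' hf hg.
pose c0 := Rint (fun k => `|complex.Re (hc q f g 0 k)|).
pose c1 := Rint (fun k => `|complex.Re (hc q f g 1 k)|).
pose c2 := Rint (fun k => `|complex.Im (hc q f g 0 k)|).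
pose c3 := Rint (fun k => `|complex.Im (hc q f g 1 k)|).
have cge0 : forall h : R -> R, 0 <= Rint (fun k => `|h k|).
  by move=> h; apply: Rintegral_ge0 => k _; exact: normr_ge0.
have C0 : 0 <= c0 + c1 + (c2 + c3) by rewrite !addr_ge0 // cge0.
move=> eps eps0.
have C1 : 0 < c0 + c1 + (c2 + c3) + 1 by lra.
exists (eps / (c0 + c1 + (c2 + c3) + 1)); first exact: divr_gt0.
set d := eps / _.
move=> n x xi x0 xn hp.
have hE := fun t => ipW q f g (Efam q t g) (fun j => ee q j t) 2 q0' hf hg
   (fun j => mes_ee q t j) (fun j k => ee_bd q t k j) (fun k j => Efam_entry q t g k j).
have hK := ipW q f g (Kop q g) (lam q) 1 q0' hf hg (mes_lam q) (fun j k => lam_bd q j k q0')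
   (fun k j => Kop_entry q g k j).
have key := fun H (j : 'I_2) (iH : intg H) =>
  key1 H (ee q j) (lam q j) n x xi d iH (fun i _ => conj (mes_ee q (x i) j) (fun k => ee_bd q (x i) k j))
    (mes_lam q j) (fun k => lam_bd q j k q0') (fun k => pointwise q d k j n x xi q0 x0 xn hp).
apply: le_lt_trans (normc_le _) _.
rewrite (ReZ n xi (fun i => ip q f (Efam q (x i) g))) (ImZ n xi (fun i => ip q f (Efam q (x i) g))).
rewrite hK.
under eq_bigr do rewrite !hE.
under [X in _ + `|X - _|]eq_bigr do rewrite !hE.
rewrite /= (split2 n xi (fun i => Rint (fun k => ee q 0 (x i) k * complex.Re (hc q f g 0 k)))
   (fun i => Rint (fun k => ee q 1 (x i) k * complex.Re (hc q f g 1 k)))).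
rewrite (split2 n xi (fun i => Rint (fun k => ee q 0 (x i) k * complex.Im (hc q f g 0 k)))
   (fun i => Rint (fun k => ee q 1 (x i) k * complex.Im (hc q f g 1 k)))).
apply: (@le_lt_trans _ _ (d * (c0 + c1) + d * (c2 + c3))).
  apply: lerD; rewrite mulrDr; apply: le_trans (ler_normD _ _) _; apply: lerD.
  - exact: (key _ 0 r0).
  - exact: (key _ 1 r1).
  - exact: (key _ 0 i0).
  - exact: (key _ 1 i1).
rewrite -mulrDr /d mulrAC ltr_pdivrMr // ltr_pM2l //; lra.
Qed.
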